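(* Let $\mathcal U$ and $\mathcal V$ be universal Martin-Löf tests. Then $\mathsf{RD}_{\mathcal V}\not\le_{\mathrm{sW}}\mathsf{LAY}_{\mathcal U}$.
   Context: Cantor space $2^\omega$, Lebesgue measure $\lambda$. A Martin-Löf (ML) test is a sequence $(\mathcal V_i)_{i\in\omega}$ of open subsets of $2^\omega$ such that $\{\langle i,\sigma\rangle:[\sigma]\subseteq\mathcal V_i\}$ is c.e. and $\lambda(\mathcal V_i)\le 2^{-i}$; it is universal if $\bigcap_i\mathcal V'_i\subseteq\bigcap_i\mathcal V_i$ for every ML-test $\mathcal V'$. $\mathrm{MLR}$ is the set of Martin-Löf random sequences ($=2^\omega\setminus\bigcap_i\mathcal U_i$ for any universal $\mathcal U$); for $X\in\mathrm{MLR}$, $\mathrm{rd}_{\mathcal U}(X)=\min\{i:X\notin\mathcal U_i\}$. A representation of a set $X$ is a surjective partial map $\delta_X:\subseteq\omega^\omega\to X$. A realizer of a multi-valued partial function $f:\subseteq X\rightrightarrows Y$ is a partial $\Gamma:\subseteq\omega^\omega\to\omega^\omega$ with $\delta_Y(\Gamma(p))\in f(\delta_X(p))$ for all $p\in\mathrm{dom}(f\circ\delta_X)$. $f\le_{\mathrm{sW}} g$ if there are Turing functionals $\Phi,\Psi$ such that $\Psi\circ\Gamma\circ\Phi$ realizes $f$ for every realizer $\Gamma$ of $g$. $\mathrm{MLR}$ is represented by the identity on $\mathrm{MLR}\subseteq\omega^\omega$, $\omega$ by $\chi_{\{n\}}\mapsto n$. $\mathsf{LAY}_{\mathcal U}\colon\mathrm{MLR}\rightrightarrows\omega$,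 $\mathsf{LAY}_{\mathcal U}(X)=\{i:X\notin\mathcal U_i\}$; $\mathsf{RD}_{\mathcal V}\colon\mathrm{MLR}\to\omega$, $\mathsf{RD}_{\mathcal V}(X)=\mathrm{rd}_{\mathcal V}(X)$. *)

(* Defs.v *)
From mathcomp Require Import all_boot.
Set Implicit Arguments. Unset Strict Implicit. Unset Printing Implicit Defensive.

Inductive prog : Type :=
  | PZero : prog
  | PSucc : prog
  | PProj : nat -> prog
  | POrc  : prog
  | PComp : prog -> list prog -> prog
  | PRec  : prog -> prog -> prog
  | PMu   : prog -> prog.

Inductive eval (o : nat -> nat) : prog -> seq nat -> nat -> Prop :=
  | ev_zero xs : eval o PZero xs 0
  | ev_succ xs : eval o PSucc xs (nth 0 xs 0).+1
  | ev_proj i xs : eval o (PProj i) xs (nth 0 xs i)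
  | ev_orc xs : eval o POrc xs (o (nth 0 xs 0))
  | ev_comp f gs xs vs v :
      evals o gs xs vs -> eval o f vs v -> eval o (PComp f gs) xs v
  | ev_rec0 b s xs v : eval o b xs v -> eval o (PRec b s) (0 :: xs) v
  | ev_recS b s n xs w v :
      eval o (PRec b s) (n :: xs) w -> eval o s [:: n, w & xs] v ->
      eval o (PRec b s) (n.+1 :: xs) v
  | ev_mu f xs n :
      eval o f (n :: xs) 0 ->
      (forall m, m < n -> exists k, eval o f (m :: xs) k.+1) ->
      eval o (PMu f) xs n
with evals (o : nat -> nat) : list prog -> seq nat -> seq nat -> Prop :=
  | evs_nil xs : evals o nil xs [::]
  | evs_cons g gs xs v vs :
      eval o g xs v -> evals o gs xs vs -> evals o (g :: gs) xs (v :: vs).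

(* Binary strings coded as natural numbers (leading-1 binary code). *)
Fixpoint enc (s : seq bool) : nat :=
  match s with [::] => 1 | b :: s' => (enc s').*2 + b end.

Definition ce2 (S : nat -> seq bool -> Prop) : Prop :=
  exists e : prog, forall i s, S i s <-> exists v, eval (fun _ => 0) e [:: i; enc s] v.

(* Partial maps on Baire space are functional relations. *)
Definition pmap := (nat -> nat) -> (nat -> nat) -> Prop.
Definition functional (G : pmap) : Prop :=
  forall p q1 q2, G p q1 -> G p q2 -> q1 = q2.

Definition TF (e : prog) : pmap := fun p q => forall n, eval p e [:: n] (q n).

Definition cantor := nat -> bool.
Definition prefix (X : cantor) (n : nat) : seq bool := mkseq X n.
Definition cyl (s : seq bool) (X : cantor) : Prop := prefix X (size s) = s.
Definition sub_cyl (s : seq bool) (A : cantor -> Prop) : Prop :=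
  forall Y, cyl s Y -> A Y.
Definition open_set (A : cantor -> Prop) : Prop :=
  forall X, A X -> exists n, sub_cyl (prefix X n) A.

(* Lebesgue measure of a finite union of cylinders [sigma], sigma in l,
   is  #{tau in 2^L | tau extends some sigma in l} / 2^L  with L = max |sigma|. *)
Definition maxlen (l : seq (seq bool)) : nat := foldr maxn 0 (map size l).
Definition ext_count (l : seq (seq bool)) : nat :=
  #|[set t : (maxlen l).-tuple bool | has (fun s => take (size s) t == s) l]|.
(* lambda(A) <= 2^-i for open A: every finite union of cylinders contained in A
   has measure <= 2^-i (lambda of an open set = sup of such measures). *)
Definition measure_le_pow2 (A : cantor -> Prop) (i : nat) : Prop :=
  forall l : seq (seq bool), (forall s, s \in l -> sub_cyl s A) ->
    ext_count l * 2 ^ i <= 2 ^ maxlen l.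

Definition ML_test (V : nat -> cantor -> Prop) : Prop :=
  [/\ forall i, open_set (V i),
      ce2 (fun i s => sub_cyl s (V i)) &
      forall i, measure_le_pow2 (V i) i].

Definition universal_test (U : nat -> cantor -> Prop) : Prop :=
  ML_test U /\
  forall V', ML_test V' -> forall X, (forall i, V' i X) -> forall i, U i X.

Definition MLR (X : cantor) : Prop :=
  forall W, ML_test W -> exists i, ~ W i X.

(* Representation of MLR: identity on MLR \subseteq omega^omega. *)
Definition delta_MLR (p : nat -> nat) (X : cantor) : Prop :=
  (forall k, p k = nat_of_bool (X k)) /\ MLR X.
Definition delta_nat (q : nat -> nat) (n : nat) : Prop :=
  forall k, q k = nat_of_bool (k == n).

Definition LAY (U : nat -> cantor -> Prop) (X : cantor) (i : nat) : Prop := ~ U i X.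
Definition RD (V : nat -> cantor -> Prop) (X : cantor) (n : nat) : Prop :=
  ~ V n X /\ forall m, m < n -> V m X.

Definition realizes {A B : Type} (dA : (nat -> nat) -> A -> Prop)
  (dB : (nat -> nat) -> B -> Prop) (f : A -> B -> Prop) (G : pmap) : Prop :=
  forall p a, dA p a -> (exists b, f a b) ->
    exists q, G p q /\ exists b, dB q b /\ f a b.

Definition pcomp3 (Psi G Phi : pmap) : pmap :=
  fun p r => exists q1 q2, Phi p q1 /\ G q1 q2 /\ Psi q2 r.

Definition sW_le {A B C D : Type}
  (dA : (nat -> nat) -> A -> Prop) (dB : (nat -> nat) -> B -> Prop) (f : A -> B -> Prop)
  (dC : (nat -> nat) -> C -> Prop) (dD : (nat -> nat) -> D -> Prop) (g : C -> D -> Prop) :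
  Prop :=
  exists ePhi ePsi : prog, forall G : pmap, functional G -> realizes dC dD g G ->
    realizes dA dB f (pcomp3 (TF ePsi) G (TF ePhi)).

(* Main.v *)
Require Import Defs.
From mathcomp Require Import all_boot.
From Stdlib Require Import Classical ClassicalEpsilon FunctionalExtensionality.
Set Implicit Arguments. Unset Strict Implicit. Unset Printing Implicit Defensive.

Fixpoint allP (P : prog -> Prop) (gs : list prog) : Prop :=
  match gs with nil => True | g :: gs' => P g /\ allP P gs' end.

Definition prog_ind' (P : prog -> Prop) (H0 : P PZero) (H1 : P PSucc)
  (H2 : forall i, P (PProj i)) (H3 : P POrc)
  (H4 : forall f gs, P f -> allP P gs -> P (PComp f gs))
  (H5 : forall b s, P b -> P s -> P (PRec b s)) (H6 : forall f, P f -> P (PMu f)) :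
  forall e, P e :=
  fix F e := match e with
  | PZero => H0 | PSucc => H1 | PProj i => H2 i | POrc => H3
  | PComp f gs => H4 f gs (F f)
      ((fix G gs := match gs return allP P gs with nil => I
         | g :: gs' => conj (F g) (G gs') end) gs)
  | PRec b s => H5 b s (F b) (F s)
  | PMu f => H6 f (F f) end.

Lemma evals_det o gs xs vs1 vs2 :
  allP (fun g => forall xs v1 v2, eval o g xs v1 -> eval o g xs v2 -> v1 = v2) gs ->
  evals o gs xs vs1 -> evals o gs xs vs2 -> vs1 = vs2.
Proof.
elim: gs vs1 vs2 => [|g gs IH] vs1 vs2 /=.
  by move=> _ H1 H2; inversion H1; inversion H2.
case=> Hg Hgs H1 H2; inversion H1; subst; inversion H2; subst.
match goal with A : eval _ g _ ?a, B : eval _ g _ ?b, C : evals _ gs _ ?c, D : evals _ gs _ ?d |- _ =>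
  by rewrite (Hg _ _ _ A B) (IH _ _ Hgs C D) end.
Qed.

Lemma eval_det o e : forall xs v1 v2, eval o e xs v1 -> eval o e xs v2 -> v1 = v2.
Proof.
elim/prog_ind': e.
- by move=> xs v1 v2 H1 H2; inversion H1; inversion H2; subst.
- by move=> xs v1 v2 H1 H2; inversion H1; inversion H2; subst.
- by move=> i xs v1 v2 H1 H2; inversion H1; inversion H2; subst.
- by move=> xs v1 v2 H1 H2; inversion H1; inversion H2; subst.
- move=> f gs IHf IHgs xs v1 v2 H1 H2; inversion H1; inversion H2; subst.
  match goal with A : evals _ gs _ ?a, B : evals _ gs _ ?b |- _ =>
    have E := evals_det IHgs A B end; subst.
  match goal with A : eval _ f _ v1, B : eval _ f _ v2 |- _ => exact: IHf _ _ _ A B end.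
- move=> b s IHb IHs xs v1 v2 H1 H2.
  case: xs H1 H2 => [|n xs] H1; first by inversion H1.
  elim: n v1 v2 H1 => [|n IHn] v1 v2 H1 H2.
    inversion H1; inversion H2; subst.
    match goal with A : eval _ b _ v1, B : eval _ b _ v2 |- _ => exact: IHb _ _ _ A B end.
  inversion H1; inversion H2; subst.
  match goal with A : eval _ (PRec b s) _ ?a, B : eval _ (PRec b s) _ ?c |- _ =>
    have E := IHn _ _ A B end; subst.
  match goal with A : eval _ s _ v1, B : eval _ s _ v2 |- _ => exact: IHs _ _ _ A B end.
- move=> f IHf xs v1 v2 H1 H2; inversion H1; inversion H2; subst.
  case: (ltngtP v1 v2) => // Hlt.
    case: (H8 _ Hlt) => k Hk; by have := IHf _ _ _ H0 Hk.
  case: (H3 _ Hlt) => k Hk; by have := IHf _ _ _ H7 Hk.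
Qed.

Section Arith.
Variable o : nat -> nat.

Lemma ev_recR b s xs (R : nat -> nat) :
  eval o b xs (R 0) -> (forall k, eval o s [:: k, R k & xs] (R k.+1)) ->
  forall n, eval o (PRec b s) (n :: xs) (R n).
Proof.
move=> H0 HS; elim=> [|n IH]; first exact: ev_rec0.
exact: ev_recS IH (HS n).
Qed.

Lemma ev_c1 f g xs a v : eval o g xs a -> eval o f [:: a] v -> eval o (PComp f [:: g]) xs v.
Proof. move=> Hg Hf; apply: ev_comp Hf; apply: evs_cons Hg (evs_nil _ _). Qed.

Lemma ev_c2 f g h xs a b v : eval o g xs a -> eval o h xs b -> eval o f [:: a; b] v ->
  eval o (PComp f [:: g; h]) xs v.
Proof.
move=> Hg Hh Hf; apply: ev_comp Hf; apply: evs_cons Hg _; apply: evs_cons Hh (evs_nil _ _).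
Qed.

Lemma ev_c3 f g h k xs a b c v : eval o g xs a -> eval o h xs b -> eval o k xs c ->
  eval o f [:: a; b; c] v -> eval o (PComp f [:: g; h; k]) xs v.
Proof.
move=> Hg Hh Hk Hf; apply: ev_comp Hf; apply: evs_cons Hg _; apply: evs_cons Hh _.
apply: evs_cons Hk (evs_nil _ _).
Qed.

Lemma ev_proj i xs : eval o (PProj i) xs (nth 0 xs i).
Proof. exact: ev_proj. Qed.

Fixpoint pconst n := match n with 0 => PZero | n.+1 => PComp PSucc [:: pconst n] end.
Lemma ev_const n xs : eval o (pconst n) xs n.
Proof. elim: n => [|n IH] /=; first exact: ev_zero. apply: ev_c1 IH _; exact: ev_succ. Qed.

Definition pPRED := PRec PZero (PProj 0).
Lemma ev_pred x : eval o pPRED [:: x] x.-1.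
Proof.
apply: (@ev_recR _ _ _ (fun n => n.-1)); first exact: ev_zero.
by move=> k; exact: ev_proj.
Qed.

Definition pADD := PRec (PProj 0) (PComp PSucc [:: PProj 1]).
Lemma ev_add x y : eval o pADD [:: x; y] (x + y).
Proof.
apply: (@ev_recR _ _ _ (fun n => n + y)); first exact: ev_proj.
move=> k; apply: ev_c1; first exact: ev_proj. exact: ev_succ.
Qed.

Definition pMUL := PRec PZero (PComp pADD [:: PProj 1; PProj 2]).
Lemma ev_mul x y : eval o pMUL [:: x; y] (x * y).
Proof.
apply: (@ev_recR _ _ _ (fun n => n * y)); first exact: ev_zero.
move=> k; apply: ev_c2; [exact: ev_proj | exact: ev_proj |].
rewrite mulSn addnC; exact: ev_add.
Qed.

Definition pSG := PRec PZero (pconst 1).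
Lemma ev_sg x : eval o pSG [:: x] (0 < x).
Proof.
apply: (@ev_recR _ _ _ (fun n => nat_of_bool (0 < n))); first exact: ev_zero.
move=> k; exact: ev_const.
Qed.

Definition pNSG := PRec (pconst 1) PZero.
Lemma ev_nsg x : eval o pNSG [:: x] (x == 0).
Proof.
apply: (@ev_recR _ _ _ (fun n => nat_of_bool (n == 0))); first exact: ev_const.
move=> k; exact: ev_zero.
Qed.

Definition pSUBT := PComp (PRec (PProj 0) (PComp pPRED [:: PProj 1])) [:: PProj 1; PProj 0].
Lemma ev_subt x y : eval o pSUBT [:: x; y] (x - y).
Proof.
apply: ev_c2; [exact: ev_proj | exact: ev_proj |].
apply: (@ev_recR _ _ _ (fun n => x - n)); first by rewrite subn0; exact: ev_proj.
move=> k; apply: ev_c1; first exact: ev_proj. rewrite subnS; exact: ev_pred.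
Qed.

Definition pEQ := PComp pNSG [:: PComp pADD [:: pSUBT; PComp pSUBT [:: PProj 1; PProj 0]]].
Lemma ev_eq x y : eval o pEQ [:: x; y] (x == y).
Proof.
have -> : (x == y) = (x - y + (y - x) == 0) by rewrite addn_eq0 !subn_eq0 eqn_leq.
apply: ev_c1; last exact: ev_nsg.
apply: ev_c2; [exact: ev_subt | apply: ev_c2; [exact: ev_proj|exact: ev_proj|exact: ev_subt] |].
exact: ev_add.
Qed.

End Arith.

Definition sv (r k : nat) : nat := (0 < r) * ((r == 1) * k.+2 + ((r == 1 : nat) == 0)).
Fixpoint srch (F : nat -> nat) (k : nat) : nat :=
  match k with 0 => 1
  | k'.+1 => let s := srch F k' in (s == 1) * sv (F k') k' + ((s == 1 : nat) == 0) * s end.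

Fixpoint recR (B : nat) (S : nat -> nat -> nat) (k : nat) : nat :=
  match k with 0 => B | k'.+1 => (0 < recR B S k') * S k' (recR B S k').-1 end.

Section BT.
Variables t i : nat.
Fixpoint bt (e : prog) (xs : seq nat) {struct e} : nat :=
  match e with
  | PZero => 1
  | PSucc => (nth 0 xs 0).+2
  | PProj j => (nth 0 xs j).+1
  | POrc => (nth 0 xs 0 == i).+1
  | PComp f gs => let ws := map (fun g => bt g xs) gs in
      all (fun w => 0 < w) ws * bt f (map predn ws)
  | PRec b s => match xs with [::] => 0 | n :: xs' =>
      recR (bt b xs') (fun k w => bt s [:: k, w & xs']) n end
  | PMu f => (srch (fun n => bt f (n :: xs)) t).-1
  end.
End BT.

Definition c2 f g h := PComp f [:: g; h].
Definition c1 f g := PComp f [:: g].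
Fixpoint allpos (ps : list prog) : prog :=
  match ps with nil => pconst 1 | p :: ps' => c2 pMUL (c1 pSG p) (allpos ps') end.
Definition projs (c n : nat) := [seq PProj (k + c) | k <- iota 0 n].

Definition pSV (r k : prog) : prog :=
  c2 pMUL (c1 pSG r) (c2 pADD (c2 pMUL (c2 pEQ r (pconst 1)) (c1 PSucc (c1 PSucc k)))
                              (c1 pNSG (c2 pEQ r (pconst 1)))).

Fixpoint comp (e : prog) (a : nat) {struct e} : prog :=
  match e with
  | PZero => pconst 1
  | PSucc => c1 PSucc (c1 PSucc (PProj 2))
  | PProj j => c1 PSucc (PProj j.+2)
  | POrc => c1 PSucc (c2 pEQ (PProj 2) (PProj 1))
  | PComp f gs => c2 pMUL (allpos (map (fun g => comp g a) gs))
      (PComp (comp f (size gs)) (PProj 0 :: PProj 1 :: map (fun g => c1 pPRED (comp g a)) gs))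
  | PRec b s => match a with 0 => PZero | a'.+1 =>
      PComp (PRec (comp b a')
        (c2 pMUL (c1 pSG (PProj 1))
          (PComp (comp s a'.+2) (PProj 2 :: PProj 3 :: PProj 0 :: c1 pPRED (PProj 1) :: projs 4 a'))))
        (PProj 2 :: PProj 0 :: PProj 1 :: projs 3 a') end
  | PMu f => c1 pPRED (PComp (PRec (pconst 1)
        (let r := PComp (comp f a.+1) (PProj 2 :: PProj 3 :: PProj 0 :: projs 4 a) in
         let s := PProj 1 in
         c2 pADD (c2 pMUL (c2 pEQ s (pconst 1)) (pSV r (PProj 0)))
                 (c2 pMUL (c1 pNSG (c2 pEQ s (pconst 1))) s)))
      (PProj 0 :: PProj 0 :: PProj 1 :: projs 2 a))
  end.

Section Correct.
Variable o : nat -> nat.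

Lemma evals_projs_gen c m n L :
  evals o [seq PProj (k + c) | k <- iota m n] L [seq nth 0 L (k + c) | k <- iota m n].
Proof.
elim: n m => [|n IH] m /=; first exact: evs_nil.
apply: evs_cons (IH _); exact: ev_proj.
Qed.

Lemma evals_projs pre xs :
  evals o (projs (size pre) (size xs)) (pre ++ xs) xs.
Proof.
have := evals_projs_gen (size pre) 0 (size xs) (pre ++ xs).
suff -> : [seq nth 0 (pre ++ xs) (k + size pre) | k <- iota 0 (size xs)] = xs by [].
rewrite -[RHS](mkseq_nth 0); apply: eq_map => k.
by rewrite nth_cat ltnNge leq_addl /= addnK.
Qed.

Lemma ev_c1' f g xs a v : eval o g xs a -> eval o f [:: a] v -> eval o (c1 f g) xs v.
Proof. exact: ev_c1. Qed.
Lemma ev_c2' f g h xs a b v : eval o g xs a -> eval o h xs b -> eval o f [:: a; b] v ->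
  eval o (c2 f g h) xs v.
Proof. exact: ev_c2. Qed.

Lemma ev_allpos ps xs ws : evals o ps xs ws -> eval o (allpos ps) xs (all (fun w => 0 < w) ws).
Proof.
elim=> [xs'|g gs xs' v vs Hg Hgs IH] /=; first exact: (ev_const o 1).
rewrite -mulnb; apply: ev_c2'; [apply: ev_c1' Hg (ev_sg _ _) | exact: IH | exact: ev_mul].
Qed.

Lemma ev_sv r k xs a b : eval o r xs a -> eval o k xs b -> eval o (pSV r k) xs (sv a b).
Proof.
move=> Hr Hk; rewrite /sv; apply: ev_c2'; [exact: ev_c1' Hr (ev_sg _ _) | | exact: ev_mul].
apply: ev_c2'; [| | exact: ev_add].
  apply: ev_c2'; [| | exact: ev_mul].
    apply: ev_c2' Hr (ev_const o 1 _) (ev_eq _ _ _).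
  apply: ev_c1'; [apply: ev_c1' Hk (ev_succ _ _) | exact: ev_succ].
apply: ev_c1'; [apply: ev_c2' Hr (ev_const o 1 _) (ev_eq _ _ _) | exact: ev_nsg].
Qed.

Lemma comp_correct t i e : forall xs, eval o (comp e (size xs)) [:: t, i & xs] (bt t i e xs).
Proof.
elim/prog_ind': e => /=.
- move=> xs; exact: (ev_const o 1).
- move=> xs; apply: ev_c1'; [apply: ev_c1' (ev_proj _ _ _) (ev_succ _ _)| exact: ev_succ].
- move=> j xs; apply: ev_c1' (ev_proj _ _ _) (ev_succ _ _).
- move=> xs; apply: ev_c1'; [apply: ev_c2' (ev_proj _ _ _) (ev_proj _ _ _) (ev_eq _ _ _)| exact: ev_succ].
- move=> f gs IHf IHgs xs.
  have Hws : evals o (map (fun g => comp g (size xs)) gs) [:: t, i & xs]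
               (map (fun g => bt t i g xs) gs).
    elim: gs IHgs {IHf} => [|g gs IH] /=; first by move=> _; exact: evs_nil.
    case=> Hg Hgs; apply: evs_cons (Hg _) (IH Hgs).
  apply: ev_c2'; [exact: ev_allpos Hws | | exact: ev_mul].
  apply: (@ev_comp o _ _ _ [:: t, i & map predn (map (fun g => bt t i g xs) gs)]); last first.
    have := IHf (map predn (map (fun g => bt t i g xs) gs)); rewrite !size_map; exact.
  apply: evs_cons; first exact: ev_proj.
  apply: evs_cons; first exact: ev_proj.
  elim: gs IHgs {IHf Hws} => [|g gs IH] /=; first by move=> _; exact: evs_nil.
  case=> Hg Hgs; apply: evs_cons (IH Hgs); apply: ev_c1' (Hg _) (ev_pred _ _).
- move=> b s IHb IHs [|n xs] /=; first exact: ev_zero.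
  apply: ev_comp.
    apply: evs_cons; first exact: ev_proj.
    apply: evs_cons; first exact: ev_proj.
    apply: evs_cons; first exact: ev_proj.
    exact: (evals_projs [:: t; i; n] xs).
  apply: ev_recR => [|k]; first exact: IHb.
  rewrite [recR _ _ k.+1]/=.
  set w := recR _ _ k.
  apply: ev_c2'; [apply: ev_c1' (ev_proj _ _ _) (ev_sg _ _) | | exact: ev_mul].
  apply: ev_comp; last exact: (IHs [:: k, w.-1 & xs]).
  apply: evs_cons; first exact: ev_proj.
  apply: evs_cons; first exact: ev_proj.
  apply: evs_cons; first exact: ev_proj.
  apply: evs_cons; first exact: ev_c1' (ev_proj _ _ _) (ev_pred _ _).
  exact: (evals_projs [:: k; w; t; i] xs).
- move=> f IHf xs; apply: ev_c1'; last exact: ev_pred.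
  apply: ev_comp.
    apply: evs_cons; first exact: ev_proj.
    apply: evs_cons; first exact: ev_proj.
    apply: evs_cons; first exact: ev_proj.
    exact: (evals_projs [:: t; i] xs).
  apply: (@ev_recR _ _ _ _ (srch (fun n => bt t i f (n :: xs)))) => [|k]; first exact: (ev_const o 1).
  have Hr : eval o (PComp (comp f (size xs).+1) [:: PProj 2, PProj 3, PProj 0 & projs 4 (size xs)])
      [:: k, srch (fun n => bt t i f (n :: xs)) k, t, i & xs] (bt t i f (k :: xs)).
    apply: ev_comp; last exact: (IHf (k :: xs)).
    apply: evs_cons; first exact: ev_proj.
    apply: evs_cons; first exact: ev_proj.
    apply: evs_cons; first exact: ev_proj.
    exact: (evals_projs [:: k; _; t; i] xs).
  rewrite [srch _ k.+1]/=.
  apply: ev_c2'; [| | exact: ev_add].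
    apply: ev_c2'; [apply: ev_c2' (ev_proj _ _ _) (ev_const o 1 _) (ev_eq _ _ _)| | exact: ev_mul].
    exact: ev_sv Hr (ev_proj _ _ _).
  apply: ev_c2'; [| exact: ev_proj | exact: ev_mul].
  apply: ev_c1'; [apply: ev_c2' (ev_proj _ _ _) (ev_const o 1 _) (ev_eq _ _ _) | exact: ev_nsg].
Qed.
End Correct.

Definition chi (i : nat) : nat -> nat := fun k => nat_of_bool (k == i).

Lemma sv_0 k : sv 0 k = 0. Proof. by []. Qed.
Lemma sv_1 k : sv 1 k = k.+2. Proof. by rewrite /sv; rewrite !mul1n addn0. Qed.
Lemma sv_gt1 r k : 1 < r -> sv r k = 1.
Proof. by case: r => [|[|r]] // _; rewrite /sv /=. Qed.

Lemma srch_S F k : srch F k.+1 =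
  if srch F k == 1 then sv (F k) k else srch F k.
Proof. by rewrite /=; case: (srch F k == 1); rewrite /= ?mul1n ?mul0n ?addn0 ?add0n. Qed.

Lemma srch_spec F k : (srch F k = 1 -> forall m, m < k -> 1 < F m) /\
  (forall n, srch F k = n.+2 -> F n = 1 /\ forall m, m < n -> 1 < F m).
Proof.
elim: k => [|k [IH1 IH2]]; first by split.
rewrite srch_S; case: eqP => Hs; last first.
  split; [by move=> H; exfalso; apply: Hs | exact: IH2].
case: (ltngtP (F k) 1) => HF.
- have -> : F k = 0 by case: (F k) HF.
  by rewrite sv_0.
- rewrite sv_gt1 //; split => // _ m; rewrite ltnS leq_eqVlt; case/orP => [/eqP->//|].
  exact: IH1.
- rewrite HF sv_1; split => // n [<-]; split => //; exact: IH1.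
Qed.

Lemma srch_hit F n : F n = 1 -> (forall m, m < n -> 1 < F m) ->
  forall k, n < k -> srch F k = n.+2.
Proof.
move=> Hn Hm.
have Hle : forall k, k <= n -> srch F k = 1.
  elim=> [//|k IH] Hk; rewrite srch_S IH ?eqxx; last exact: ltnW.
  by rewrite sv_gt1 //; exact: Hm.
elim=> [//|k IH] Hk.
rewrite srch_S; move: Hk; rewrite ltnS leq_eqVlt; case/orP => [/eqP <-| Hnk].
  by rewrite Hle // eqxx Hn sv_1.
by rewrite IH.
Qed.

Section Sem.
Variable i : nat.

Lemma bt_sound t e : forall xs v, bt t i e xs = v.+1 -> eval (chi i) e xs v.
Proof.
elim/prog_ind': e => /=.
- by move=> xs v [<-]; exact: ev_zero.
- by move=> xs v [<-]; exact: ev_succ.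
- by move=> j xs v [<-]; exact: ev_proj.
- by move=> xs v [<-]; exact: ev_orc.
- move=> f gs IHf IHgs xs v H.
  have Hall : all (fun w => 0 < w) (map (fun g => bt t i g xs) gs).
    by case: (all _ _) H.
  rewrite Hall mul1n in H.
  apply: ev_comp (IHf _ _ H).
  elim: gs IHgs Hall {H} => [|g gs IH] /=; first by move=> _ _; exact: evs_nil.
  case=> Hg Hgs /andP [Hpos Hall]; apply: evs_cons (IH Hgs Hall).
  apply: Hg; by rewrite prednK.
- move=> b s IHb IHs [|n xs] v //.
  elim: n v => [|n IHn] v /=; first by move=> H; apply: ev_rec0; exact: IHb.
  case E: (recR _ _ n) => [|w] //=; rewrite mul1n => H.
  apply: ev_recS (IHn _ E) (IHs _ _ H).
- move=> f IHf xs v H.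
  have Hs : srch (fun n => bt t i f (n :: xs)) t = v.+2 by case: (srch _ t) H => [|[|x]] //= ->.
  case: (srch_spec (fun n => bt t i f (n :: xs)) t) => _ /(_ _ Hs) [Hv Hm].
  apply: ev_mu; first exact: IHf.
  move=> m /Hm; case E: (bt t i f (m :: xs)) => [|[|k]] // _.
  by exists k; apply: IHf.
Qed.

Definition evtl (P : nat -> Prop) := exists t0, forall t, t0 <= t -> P t.

Lemma evtl_and P Q : evtl P -> evtl Q -> evtl (fun t => P t /\ Q t).
Proof.
move=> [a Ha] [b Hb]; exists (maxn a b) => t Ht; split.
  by apply: Ha; apply: leq_trans Ht; exact: leq_maxl.
by apply: Hb; apply: leq_trans Ht; exact: leq_maxr.
Qed.

Lemma evtl_imp (P Q : nat -> Prop) : (forall t, P t -> Q t) -> evtl P -> evtl Q.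
Proof. by move=> H [a Ha]; exists a => t /Ha /H. Qed.

Lemma evtl_ge n : evtl (fun t => n <= t).
Proof. by exists n. Qed.

Lemma evtl_all n (P : nat -> nat -> Prop) : (forall m, m < n -> evtl (fun t => P t m)) ->
  evtl (fun t => forall m, m < n -> P t m).
Proof.
elim: n => [|n IH] H; first by exists 0.
have := evtl_and (IH (fun m Hm => H m (ltnW Hm))) (H n (ltnSn n)).
apply: evtl_imp => t [H1 H2] m; rewrite ltnS leq_eqVlt; case/orP => [/eqP->//|]; exact: H1.
Qed.

Lemma bt_complete e : forall xs v, eval (chi i) e xs v -> evtl (fun t => bt t i e xs = v.+1).
Proof.
elim/prog_ind': e.
- by move=> xs v H; inversion H; exists 0.
- by move=> xs v H; inversion H; exists 0.
- by move=> j xs v H; inversion H; exists 0.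
- by move=> xs v H; inversion H; exists 0.
- move=> f gs IHf IHgs xs v H; inversion H; subst.
  have Hgs : evtl (fun t => map (fun g => bt t i g xs) gs = map succn vs).
    elim: gs vs IHgs {H IHf H5} H2 => [|g gs IH] vs /=.
      by move=> _ Hv; inversion Hv; exists 0.
    case=> Hg Hgs Hv; inversion Hv; subst.
    match goal with A : eval _ g _ _, B : evals _ gs _ _ |- _ =>
      have := evtl_and (Hg _ _ A) (IH _ Hgs B) end.
    by apply: evtl_imp => t [-> ->].
  have := evtl_and Hgs (IHf _ _ H5); apply: evtl_imp => t [E1 E2] /=.
  rewrite E1 -map_comp map_id.
  have -> : all (fun w => 0 < w) (map succn vs) by clear; elim: vs.
  by rewrite mul1n.
- move=> b s IHb IHs [|n xs] v H; first by inversion H.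
  elim: n v H => [|n IHn] v H; inversion H; subst.
    by have := IHb _ _ H4.
  have := evtl_and (IHn _ H5) (IHs _ _ H6); apply: evtl_imp => t [E1 E2] /=.
  by move: E1 => /= E1; rewrite E1 /= mul1n.
- move=> f IHf xs v H; inversion H; subst.
  have Hm : evtl (fun t => forall m, m < v -> 1 < bt t i f (m :: xs)).
    apply: evtl_all => m Hmv.
    case: (H2 m Hmv) => k Hk.
    have := IHf _ _ Hk; by apply: evtl_imp => t ->.
  match goal with A : eval _ f _ 0 |- _ =>
  have := evtl_and (evtl_and Hm (IHf _ _ A)) (evtl_ge v.+1) end.
  apply: evtl_imp => t [[E1 E2] E3] /=.
  by rewrite (srch_hit E2 E1).
Qed.

End Sem.

Section Search.
Variables (ePsi : prog) (k1 : nat).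
Variable o : nat -> nat.

Definition okv t i := let w := bt t i ePsi [:: k1] in (0 < w) * ((w == 2 : nat) == 0).
Definition pW := PComp (comp ePsi 1) [:: PProj 0; PProj 1; pconst k1].
Definition pOK := c2 pMUL (c1 pSG pW) (c1 pNSG (c2 pEQ pW (pconst 2))).

Lemma ev_W t i : eval o pW [:: t; i] (bt t i ePsi [:: k1]).
Proof.
apply: ev_comp; last exact: (comp_correct o t i ePsi [:: k1]).
apply: evs_cons; first exact: ev_proj.
apply: evs_cons; first exact: ev_proj.
apply: evs_cons; first exact: ev_const.
exact: evs_nil.
Qed.

Lemma ev_OK t i : eval o pOK [:: t; i] (okv t i).
Proof.
apply: ev_c2'; [apply: ev_c1' (ev_W _ _) (ev_sg _ _) | | exact: ev_mul].
apply: ev_c1'; [apply: ev_c2' (ev_W _ _) (ev_const o 2 _) (ev_eq _ _ _) | exact: ev_nsg].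
Qed.

Fixpoint sumok q j b := match b with 0 => 0 | b'.+1 => sumok q j b' + okv q (j + b') end.
Definition pSUM := PRec PZero (c2 pADD (PProj 1) (PComp pOK [:: PProj 2; c2 pADD (PProj 3) (PProj 0)])).
Lemma ev_SUM b q j : eval o pSUM [:: b; q; j] (sumok q j b).
Proof.
apply: (@ev_recR o _ _ _ (sumok q j)) => [|k]; first exact: ev_zero.
apply: ev_c2'; [exact: ev_proj | | exact: ev_add].
apply: ev_comp; last exact: ev_OK.
apply: evs_cons; first exact: ev_proj.
apply: evs_cons; first exact: (ev_c2' (ev_proj _ _ _) (ev_proj _ _ _) (ev_add _ _ _)).
exact: evs_nil.
Qed.

Definition pF1 := c1 pNSG (PComp pSUM [:: c1 PSucc (PProj 0); PProj 0; PProj 1]).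
Lemma ev_F1 q j : eval o pF1 [:: q; j] (sumok q j q.+1 == 0).
Proof.
apply: ev_c1'; last exact: ev_nsg.
apply: ev_comp; last exact: ev_SUM.
apply: evs_cons; first exact: (ev_c1' (ev_proj _ _ _) (ev_succ _ _)).
apply: evs_cons; first exact: ev_proj.
apply: evs_cons; first exact: ev_proj.
exact: evs_nil.
Qed.

Definition pF2 := c1 pNSG (PComp pOK [:: PProj 1; c2 pADD (PProj 2) (PProj 0)]).
Lemma ev_F2 n q j : eval o pF2 [:: n; q; j] (okv q (j + n) == 0).
Proof.
apply: ev_c1'; last exact: ev_nsg.
apply: ev_comp; last exact: ev_OK.
apply: evs_cons; first exact: ev_proj.
apply: evs_cons; first exact: (ev_c2' (ev_proj _ _ _) (ev_proj _ _ _) (ev_add _ _ _)).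
exact: evs_nil.
Qed.

Definition pC := c2 pADD (PProj 0) (PComp (PMu pF2) [:: PMu pF1; PProj 0]).

Lemma sumok_pos q j b : sumok q j b != 0 -> exists2 n, n < b & okv q (j + n) != 0.
Proof.
elim: b => [|b IH] //=; rewrite addn_eq0 negb_and; case/orP.
  by move/IH => [n Hn H]; exists n => //; exact: ltnW.
by exists b.
Qed.

Lemma sumok_ge q j b n : n < b -> okv q (j + n) <= sumok q j b.
Proof.
elim: b => [|b IH] //=; rewrite ltnS leq_eqVlt; case/orP => [/eqP->|/IH H].
  exact: leq_addl.
exact: leq_trans H (leq_addr _ _).
Qed.

Lemma pC_total : (forall j, exists i, j <= i /\ evtl (fun t => bt t i ePsi [:: k1] = 1)) ->
  forall j, exists c, eval o pC [:: j] c.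
Proof.
move=> Hex j.
have Hq : exists q, sumok q j q.+1 != 0.
  case: (Hex j) => i [Hji [t0 Ht0]].
  exists (maxn t0 (i - j)).
  have Hok : okv (maxn t0 (i - j)) (j + (i - j)) = 1.
    by rewrite /okv subnKC // Ht0 // leq_maxl.
  have Hle := @sumok_ge (maxn t0 (i - j)) j (maxn t0 (i - j)).+1 (i - j).
  rewrite -lt0n; apply: leq_trans (Hle _); first by rewrite Hok.
  by rewrite ltnS leq_maxr.
pose q := ex_minn Hq.
have Hn : exists n, okv q (j + n) != 0.
  rewrite /q; case: (ex_minnP Hq) => q' Hq' _.
  by case: (sumok_pos Hq') => n _ Hn; exists n.
pose n := ex_minn Hn.
exists (j + n).
apply: ev_c2'; [exact: ev_proj | | exact: ev_add].
apply: (ev_c2' (a := q) (b := j)); [| exact: ev_proj |].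
  apply: ev_mu; rewrite /q; case: (ex_minnP Hq) => q' Hq' Hmin.
    by have := ev_F1 q' j; rewrite (negbTE Hq').
  move=> m Hm; exists 0; have := ev_F1 m j.
  case E: (sumok m j m.+1 == 0) => //.
  by have := Hmin m; rewrite E => /(_ isT); rewrite leqNgt Hm.
apply: ev_mu; rewrite /n; case: (ex_minnP Hn) => n' Hn' Hmin.
  by have := ev_F2 n' q j; rewrite (negbTE Hn').
move=> m Hm; exists 0; have := ev_F2 m q j.
case E: (okv q (j + m) == 0) => //.
by have := Hmin m; rewrite E => /(_ isT); rewrite leqNgt Hm.
Qed.

Lemma inv_c2 f g h xs v : eval o (c2 f g h) xs v ->
  exists a b, [/\ eval o g xs a, eval o h xs b & eval o f [:: a; b] v].
Proof.
move=> H; inversion H; subst.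
inversion H2; subst. inversion H7; subst. inversion H9; subst.
match goal with A : eval _ g _ ?x, B : eval _ h _ ?y |- _ => by exists x, y end.
Qed.

Lemma inv_mu f xs n : eval o (PMu f) xs n -> eval o f (n :: xs) 0.
Proof. by move=> H; inversion H. Qed.

Lemma pC_spec j c : eval o pC [:: j] c ->
  j <= c /\ exists t v, v != 1 /\ bt t c ePsi [:: k1] = v.+1.
Proof.
case/inv_c2 => a [b [H1 H2 H3]].
have E1 := eval_det H1 (ev_proj _ _ _); simpl in E1; subst.
have E2 := eval_det H3 (ev_add _ _ _); subst.
split; first exact: leq_addr.
case/inv_c2: H2 => q [j' [H4 H5 H6]].
have E3 := eval_det H5 (ev_proj _ _ _); simpl in E3; subst.
have E4 := eval_det (inv_mu H6) (ev_F2 _ _ _).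
move: E4; case E: (okv q (j + b) == 0) => // _.
move: E; rewrite /okv; case E': (bt q (j + b) ePsi [:: k1]) => [|[|[|w]]] //= _.
  by exists q, 0.
by exists q, w.+2.
Qed.

End Search.

Notation o0 := (fun _ : nat => 0).

Lemma cylP s Y : cyl s Y <-> forall k, k < size s -> Y k = nth false s k.
Proof.
rewrite /cyl /prefix; split.
  by move=> E k Hk; rewrite -E nth_mkseq.
move=> H; apply: (@eq_from_nth _ false); first by rewrite size_mkseq.
by move=> k; rewrite size_mkseq => Hk; rewrite nth_mkseq // H.
Qed.

Lemma inv_c1 o f g xs v : eval o (PComp f [:: g]) xs v ->
  exists a, eval o g xs a /\ eval o f [:: a] v.
Proof.
move=> H; inversion H; subst. inversion H2; subst. inversion H7; subst.
match goal with A : eval _ g _ ?x |- _ => by exists x end.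
Qed.

Lemma inv_c2' o f g h xs v : eval o (PComp f [:: g; h]) xs v ->
  exists a b, [/\ eval o g xs a, eval o h xs b & eval o f [:: a; b] v].
Proof.
move=> H; inversion H; subst.
inversion H2; subst. inversion H7; subst. inversion H9; subst.
match goal with A : eval _ g _ ?x, B : eval _ h _ ?y |- _ => by exists x, y end.
Qed.

Section TestComp.
Variables (U : nat -> cantor -> Prop) (H : prog).
Hypothesis HU : ML_test U.
Hypothesis Htot : forall j, exists c, eval o0 H [:: j] c.
Hypothesis Hge : forall j c, eval o0 H [:: j] c -> j <= c.

Definition Tc j X := exists c, eval o0 H [:: j] c /\ U c X.

Lemma Tc_eq j c : eval o0 H [:: j] c -> forall X, Tc j X <-> U c X.
Proof.
move=> Hc X; split; first by case=> c' [Hc' HX]; rewrite (eval_det Hc Hc').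
by move=> HX; exists c.
Qed.

Lemma sub_cyl_ext (A B : cantor -> Prop) s : (forall X, A X <-> B X) -> sub_cyl s A -> sub_cyl s B.
Proof. by move=> E HA Y /HA /E. Qed.

Lemma Tc_test : ML_test Tc.
Proof.
case: HU => Hop [e He] Hme.
split.
- move=> j X; case: (Htot j) => c Hc; move/(Tc_eq Hc) => HX.
  case: (Hop c X HX) => n Hn; exists n; apply: sub_cyl_ext Hn => Y.
  by split; move/(Tc_eq Hc).
- exists (PComp e [:: PComp H [:: PProj 0]; PProj 1]) => j s.
  case: (Htot j) => c Hc.
  have Hcyl : sub_cyl s (Tc j) <-> sub_cyl s (U c).
    by split; apply: sub_cyl_ext => Y; [|split]; move: Y; [apply: Tc_eq | move=> Y /(Tc_eq Hc) | move=> Y /(Tc_eq Hc)].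
  rewrite Hcyl He; split.
    case=> v Hv; exists v; apply: ev_c2 Hv; last exact: ev_proj.
    by apply: ev_c1 Hc; exact: ev_proj.
  case=> v /inv_c2' [a [b [H1 H2 H3]]]; exists v.
  case/inv_c1: H1 => a' [H4 H5].
  have E1 := eval_det H4 (ev_proj _ _ _); simpl in E1; subst.
  have E2 := eval_det H5 Hc; subst.
  by have E3 := eval_det H2 (ev_proj _ _ _); simpl in E3; subst.
- move=> j l Hl; case: (Htot j) => c Hc.
  have := Hme c l (fun s Hs => sub_cyl_ext (Tc_eq Hc) (Hl s Hs)).
  apply: leq_trans; apply: leq_mul => //; rewrite leq_exp2l //; exact: Hge.
Qed.
End TestComp.

Definition ZT (i : nat) (X : cantor) : Prop := forall k, k < i -> X k = false.

Definition pPOW2 := PRec (pconst 1) (c2 pADD (PProj 1) (PProj 1)).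
Lemma ev_pow2 o i : eval o pPOW2 [:: i] (2 ^ i).
Proof.
apply: (@ev_recR o _ _ _ (fun n => 2 ^ n)) => [|k]; first exact: (ev_const o 1).
apply: ev_c2'; [exact: ev_proj | exact: ev_proj |].
by rewrite expnS mul2n -addnn; exact: ev_add.
Qed.

Definition pMOD := PRec PZero (c2 pMUL (c1 PSucc (PProj 1))
                          (c1 pNSG (c2 pEQ (c1 PSucc (PProj 1)) (PProj 2)))).
Lemma modS' k d : 0 < d -> k.+1 %% d = (k %% d).+1 * (((k %% d).+1 == d : nat) == 0).
Proof.
move=> Hd.
have -> : k.+1 %% d = (k %% d).+1 %% d by rewrite -addn1 -modnDml addn1.
have : (k %% d).+1 <= d by rewrite ltn_pmod.
rewrite leq_eqVlt; case/orP => [/eqP E|E]; first by rewrite E modnn eqxx /= muln0.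
by rewrite modn_small // (ltn_eqF E) muln1.
Qed.

Lemma ev_mod o x m : 0 < m -> eval o pMOD [:: x; m] (x %% m).
Proof.
move=> Hm; apply: (@ev_recR o _ _ _ (fun n => n %% m)) => [|k]; first by rewrite mod0n; exact: ev_zero.
rewrite modS' //.
apply: ev_c2'; [exact: ev_c1' (ev_proj _ _ _) (ev_succ _ _) | | exact: ev_mul].
apply: ev_c1'; [| exact: ev_nsg].
apply: ev_c2'; [exact: ev_c1' (ev_proj _ _ _) (ev_succ _ _) | exact: ev_proj | exact: ev_eq].
Qed.

Definition pZT := PMu (c2 pMOD (PProj 2) (c1 pPOW2 (PProj 1))).

Lemma pZT_spec o i x : (exists v, eval o pZT [:: i; x] v) <-> x %% 2 ^ i = 0.
Proof.
have Hf : forall n, eval o (c2 pMOD (PProj 2) (c1 pPOW2 (PProj 1))) [:: n; i; x] (x %% 2 ^ i).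
  move=> n; apply: ev_c2'; [exact: ev_proj | exact: ev_c1' (ev_proj _ _ _) (ev_pow2 _ _) |].
  apply: ev_mod; exact: expn_gt0.
split.
  case=> v Hv; have H := inv_mu Hv; exact: eval_det (Hf v) H.
move=> E; exists 0; apply: ev_mu => [|m //]; by have := Hf 0; rewrite E.
Qed.

Lemma dvd_enc i s : (forall k, k < i -> k < size s /\ nth false s k = false) -> 2 ^ i %| enc s.
Proof.
elim: i s => [|i IH] [|b s] H //.
  by case: (H 0 isT).
case: (H 0 isT) => _ /= Hb; subst b.
rewrite /= addn0 -mul2n expnS dvdn_pmul2l //; apply: IH => k Hk.
exact: (H k.+1 Hk).
Qed.

Lemma enc_dvd i s : 2 ^ i %| enc s -> forall k, k < i -> k < size s /\ nth false s k = false.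
Proof.
elim: i s => [|i IH] s H k Hk; first by rewrite ltn0 in Hk.
case: s H => [|b s] H.
  exfalso; move: H; rewrite /= dvdn1 expnS => /eqP.
  by case: (2 ^ i) => [|n] //; rewrite mul2n doubleS.
move: H; rewrite /= expnS.
case: b => /=.
  move=> H; have : 2 %| (enc s).*2 + 1 by apply: dvdn_trans H; exact: dvdn_mulr.
  by rewrite -mul2n dvdn_addr ?dvdn1 //; apply: dvdn_mulr.
rewrite addn0 -mul2n dvdn_pmul2l // => H.
case: k Hk => [|k] // Hk.
by case: (IH _ H k Hk).
Qed.

Lemma sub_cyl_ZT i s : sub_cyl s (ZT i) <-> 2 ^ i %| enc s.
Proof.
split.
  move=> H; apply: dvd_enc => k Hk.
  pose Y := fun k => if k < size s then nth false s k else true.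
  have HY : cyl s Y by apply/cylP => k' Hk'; rewrite /Y Hk'.
  have := H Y HY k Hk; rewrite /Y; case: ifP => //.
move/enc_dvd => H Y /cylP HY k Hk.
case: (H k Hk) => Hks Hn; by rewrite HY.
Qed.

Lemma maxlen_ge l s : s \in l -> size s <= maxlen l.
Proof.
elim: l => [|s' l IH] //=; rewrite inE; case/orP => [/eqP->|/IH H].
  exact: leq_maxl.
exact: leq_trans H (leq_maxr _ _).
Qed.

Lemma ZT_measure i : measure_le_pow2 (ZT i) i.
Proof.
move=> l Hl.
case: l Hl => [|s0 l'] Hl.
  rewrite /ext_count /=.
  have -> : [set t : 0.-tuple bool | false] = set0 by apply/setP => t; rewrite !inE.
  by rewrite cards0.
set l := s0 :: l' in Hl *.
set L := maxlen l.
have HiL : i <= L.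
  have Hs0 := Hl s0 (mem_head _ _).
  move/sub_cyl_ZT: Hs0 => /enc_dvd H.
  case: (posnP i) => [->//|Hi].
  have Hi' : i.-1 < i by rewrite prednK.
  have [H1 _] := H i.-1 Hi'.
  apply: leq_trans (maxlen_ge (mem_head _ _)); by rewrite -(prednK Hi).
set S := [set t : L.-tuple bool | has (fun s => take (size s) t == s) l].
have HS : forall t, t \in S -> take i t = nseq i false.
  move=> t; rewrite inE => /hasP [s Hs /eqP Et].
  have := enc_dvd (proj1 (sub_cyl_ZT i s) (Hl s Hs)) => H.
  have Hsz : size (take i t) = i.
    rewrite size_take size_tuple; case: ltnP => // H'; apply/eqP; by rewrite eqn_leq H' HiL.
  apply: (@eq_from_nth _ false); first by rewrite Hsz size_nseq.
  move=> k; rewrite Hsz => Hki.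
  rewrite nth_take // nth_nseq Hki.
  case: (H k Hki) => Hks Hn; by rewrite -Et nth_take in Hn.
pose f := fun t : L.-tuple bool => [tuple of drop i t].
have Hinj : {in S &, injective f}.
  move=> t1 t2 H1 H2 /(congr1 val) /= E.
  apply: val_inj => /=; by rewrite -(cat_take_drop i t1) -(cat_take_drop i t2) E (HS _ H1) (HS _ H2).
change (#|S| * 2 ^ i <= 2 ^ L).
rewrite -(card_in_imset Hinj).
have := max_card (f @: S); rewrite card_tuple card_bool => Hc.
apply: leq_trans (leq_mul Hc (leqnn _)) _.
by rewrite -expnD subnK.
Qed.

Lemma ZT_test : ML_test ZT.
Proof.
split.
- move=> i X HX; exists i => Y /cylP HY k Hk.
  rewrite HY /prefix ?size_mkseq // nth_mkseq //; exact: HX.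
- exists pZT => i s; rewrite sub_cyl_ZT pZT_spec /dvdn; split; first by move/eqP.
  by move=> ->.
- exact: ZT_measure.
Qed.

Lemma MLR_of_notU U c X : universal_test U -> ~ U c X -> MLR X.
Proof.
move=> [_ Huniv] HX W HW; apply: NNPP => Hn; apply: HX.
apply: (Huniv W HW X) => i; apply: NNPP => Hi; apply: Hn; by exists i.
Qed.

Lemma exists_notU U s : ML_test U -> exists X, cyl s X /\ ~ U (size s).+1 X.
Proof.
case=> _ _ Hme; apply: NNPP => Hn.
have Hsub : sub_cyl s (U (size s).+1).
  move=> Y HY; apply: NNPP => HnY; apply: Hn; by exists Y.
have HL : size s = maxlen [:: s] by rewrite /maxlen /= maxn0.
have Hpos : 0 < ext_count [:: s].
  apply/card_gt0P; exists (tcast HL (in_tuple s)).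
  by rewrite inE /= val_tcast /= take_size eqxx.
have := Hme (size s).+1 [:: s].
have H1 : forall s', s' \in [:: s] -> sub_cyl s' (U (size s).+1).
  by move=> s'; rewrite inE => /eqP ->.
move/(_ H1); rewrite -HL => H.
have : 2 ^ (size s).+1 <= 2 ^ size s.
  apply: leq_trans H; rewrite -{1}(mul1n (2 ^ _)); exact: leq_mul.
by rewrite leq_exp2l // ltnn.
Qed.

Lemma least (P : nat -> Prop) : (exists n, P n) -> exists n, P n /\ forall m, m < n -> ~ P m.
Proof.
case=> n Hn.
suff H : forall N n, n <= N -> P n -> exists n, P n /\ forall m, m < n -> ~ P m by exact: H Hn.
elim=> [|N IH] k Hk HPk.
  exists k; split => // m; by rewrite leqn0 in Hk; rewrite (eqP Hk).
case: (classic (exists m, m < k /\ P m)) => [[m [Hm HPm]]|Hno].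
  apply: (IH m) => //; by rewrite -ltnS; apply: leq_trans Hm Hk.
exists k; split => // m Hm HPm; apply: Hno; by exists m.
Qed.

Lemma level_ex V X : ML_test V -> MLR X -> exists k, RD V X k.
Proof.
move=> HV HX; case: (least (HX V HV)) => k [Hk Hm].
exists k; split => // m /Hm; exact: NNPP.
Qed.

Lemma RD_uniq V X a b : RD V X a -> RD V X b -> a = b.
Proof.
move=> [Ha Ha'] [Hb Hb']; case: (ltngtP a b) => // H.
  by case: Ha; apply: Hb'.
by case: Hb; apply: Ha'.
Qed.

Definition pX (X : cantor) : nat -> nat := fun k => nat_of_bool (X k).

Definition sel (U : nat -> cantor -> Prop) (Y : cantor) : nat :=
  epsilon (inhabits 0) (fun i => ~ U i Y).
Definition Gm (U : nat -> cantor -> Prop) (Y0 : cantor) (i0 : nat) : (nat -> nat) -> (nat -> nat) -> Prop :=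
  fun p q => exists Y, delta_MLR p Y /\
    q = chi (if excluded_middle_informative (Y = Y0) then i0 else sel U Y).

Lemma delta_fun p Y Y' : delta_MLR p Y -> delta_MLR p Y' -> Y = Y'.
Proof.
move=> [H _] [H' _]; apply: functional_extensionality => k.
have := H k; rewrite H'; by case: (Y k); case: (Y' k).
Qed.

Lemma Gm_ok U Y0 i0 : ~ U i0 Y0 ->
  functional (Gm U Y0 i0) /\ realizes delta_MLR delta_nat (LAY U) (Gm U Y0 i0).
Proof.
move=> Hi0; split.
  by move=> p q1 q2 [Y [HY ->]] [Y' [HY' ->]]; rewrite (delta_fun HY HY').
move=> p a Ha [b Hb].
exists (chi (if excluded_middle_informative (a = Y0) then i0 else sel U a)).
split; first by exists a.
exists (if excluded_middle_informative (a = Y0) then i0 else sel U a); split => //.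
case: (excluded_middle_informative (a = Y0)) => [E|_] /=; first by rewrite /LAY E.
by apply: (epsilon_spec (inhabits 0) (fun i => ~ U i a)); exists b.
Qed.

Lemma TF_fun e p q1 q2 : TF e p q1 -> TF e p q2 -> q1 = q2.
Proof.
move=> H1 H2; apply: functional_extensionality => n; exact: eval_det (H1 n) (H2 n).
Qed.

Theorem proposition5p5 (U V : nat -> cantor -> Prop) :
  universal_test U -> universal_test V ->
  ~ sW_le delta_MLR delta_nat (RD V) delta_MLR delta_nat (LAY U).
Proof.
move=> HU HV [ePhi [ePsi Hsw]].
have HUt := HU.1; have HVt := HV.1.
have step1 : forall X, MLR X -> exists q1 Y, TF ePhi (pX X) q1 /\ delta_MLR q1 Y.
  move=> X HX; case: (level_ex HVt HX) => k Hk.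
  case: (HX U HUt) => i0 Hi0.
  case: (Gm_ok Hi0) => Hf Hr.
  have := Hsw _ Hf Hr (pX X) X (conj (fun k => erefl) HX) (ex_intro _ k Hk).
  case=> r [[q1 [q2 [H1 [[Y [HY _]] _]]]] _]; by exists q1, Y.
have step2 : forall X q1 Y i k, MLR X -> TF ePhi (pX X) q1 -> delta_MLR q1 Y ->
    ~ U i Y -> RD V X k -> forall m, eval (chi i) ePsi [:: m] (m == k).
  move=> X q1 Y i k HX H1 HY Hi Hk m.
  case: (Gm_ok Hi) => Hf Hr.
  have := Hsw _ Hf Hr (pX X) X (conj (fun k => erefl) HX) (ex_intro _ k Hk).
  case=> r [[q1' [q2 [H1' [[Y' [HY' Eq2]] H3]]]] [b [Hb Hbk]]].
  have E1 := TF_fun H1 H1'; subst q1'.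
  have E2 := delta_fun HY HY'; subst Y'.
  subst q2.
  move: H3; case: (excluded_middle_informative (Y = Y)) => [_|C] /= H3; last by case: C.
  have := H3 m; by rewrite Hb (RD_uniq Hbk Hk).
(* two random points of different levels *)
case: (exists_notU [::] HUt) => X1 [_ HX1u].
have HX1 := MLR_of_notU HU HX1u.
case: (level_ex HVt HX1) => k1 Hk1.
pose Z : cantor := fun _ => false.
have HZ : forall i, V i Z by apply: (HV.2 ZT ZT_test Z) => i k _.
case: HVt => HVop _ _.
case: (HVop k1 Z (HZ k1)) => n Hn.
case: (exists_notU (Defs.prefix Z n) HUt) => X2 [HX2c HX2u].
have HX2V := Hn X2 HX2c.
have HX2 := MLR_of_notU HU HX2u.
case: (level_ex HV.1 HX2) => k2 Hk2.
have Hk12 : k1 != k2 by apply/eqP => E; subst k2; case: Hk2 => H _; exact: H HX2V.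
case: (step1 X1 HX1) => q1 [Y1 [HP1 HY1]].
case: (step1 X2 HX2) => q2 [Y2 [HP2 HY2]].
(* L(Y2) is unbounded and Psi answers 0 at k1 there *)
have Hunb : forall j, exists i, j <= i /\ evtl (fun t => bt t i ePsi [:: k1] = 1).
  move=> j.
  pose H := c2 pADD (PProj 0) (pconst j).
  have HH : forall j', eval o0 H [:: j'] (j' + j).
    by move=> j'; apply: ev_c2'; [exact: ev_proj | exact: ev_const | exact: ev_add].
  have Htest : ML_test (Tc U H).
    apply: Tc_test => //; first by move=> j'; exists (j' + j).
    by move=> j' c Hc; rewrite (eval_det Hc (HH j')); exact: leq_addr.
  case: (HY2.2 _ Htest) => i' Hi'.
  have Hnu : ~ U (i' + j) Y2 by move=> HU'; apply: Hi'; exists (i' + j).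
  exists (i' + j); split; first exact: leq_addl.
  have := step2 X2 q2 Y2 (i' + j) k2 HX2 HP2 HY2 Hnu Hk2 k1.
  rewrite (negbTE Hk12) => Hev; exact: bt_complete Hev.
have Htot := pC_total o0 Hunb.
have Htest : ML_test (Tc U (pC ePsi k1)).
  apply: Tc_test => //.
  by move=> j c /pC_spec [].
case: (HY1.2 _ Htest) => j Hj.
case: (Htot j) => c Hc.
case: (pC_spec Hc) => _ [t [v [Hv1 Hbt]]].
have Hev := bt_sound Hbt.
apply: Hj; exists c; split => //.
apply: NNPP => Hnu.
have := step2 X1 q1 Y1 c k1 HX1 HP1 HY1 Hnu Hk1 k1; rewrite eqxx => Hev1.
by move: Hv1; rewrite (eval_det Hev Hev1).
Qed.
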